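(* Let $R\geq 1$ be a real number and let $C,t\in \mathbb N$ be fixed. Consider pairs of sequences $\{\lambda_i\},\{\nu_i\}$ of nonnegative integers such that $\lambda_i\leq t$ for all $i$ and $\sum_{i\geq 1}(R\lambda_i+\nu_i) \leq C$. Under these conditions the maximal value of the expression $$A(\{\lambda\},\{\nu\})=\sum_{i\geq 1}\nu_i(\lambda_i-\nu_i)$$ can be attained by a pair of sequences $\{\lambda_i\},\{\nu_i\}$, $i=1,2,\dots,r$, such that: (i) $\lambda_1\geq \lambda_2 \geq \dots \geq \lambda_r$, $\nu_1\geq \nu_2 \geq \dots \geq \nu_r\geq 1$, and $\lambda_i \geq \nu_i$ for all $i$; (ii) $\lambda_1=\lambda_2 = \dots = \lambda_{r-1}=t$; and (iii) for some $0\leq b\leq r-1$ we have $\nu_1= \nu_2 = \dots = \nu_b=\nu_{b+1}+1=\dots=\nu_{r-1}+1$. If moreover $\lambda_r=t$, then also $\nu_r \in \{\nu_1, \nu_1-1\}$.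
   Context: The sequences $\{\lambda_i\},\{\nu_i\}$ are sequences of nonnegative integers indexed by $i\ge 1$ (with only finitely many nonzero terms, since $\sum_i(R\lambda_i+\nu_i)\le C$). *)

(* Defs.v *)
From HB Require Import structures.
From mathcomp Require Import all_boot all_order all_algebra.
From mathcomp Require Import reals.
Set Implicit Arguments. Unset Strict Implicit. Unset Printing Implicit Defensive.
Import Order.TTheory GRing.Theory Num.Theory.
Local Open Scope ring_scope.

(* A pair of finitely supported sequences {lambda_i}, {nu_i} (i >= 1) is
   represented by two lists [lam], [nu] of the same length; the 0-based
   entry [nth 0 lam i] is lambda_{i+1}.  Trailing zero pairs contribute
   nothing to either the constraint or the objective. *)

Definition Aval (lam nu : seq nat) : int :=
  \sum_(i < size lam) ((nth 0%N nu i)%:Z * ((nth 0%N lam i)%:Z - (nth 0%N nu i)%:Z)).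

Definition admissible (F : realType) (R : F) (C t : nat) (lam nu : seq nat) : Prop :=
  size lam = size nu /\
  (forall i, (i < size lam)%N -> (nth 0%N lam i <= t)%N) /\
  \sum_(i < size lam) (R * (nth 0%N lam i)%:R + (nth 0%N nu i)%:R) <= C%:R.

(* Main.v *)
Require Import Defs.
From HB Require Import structures.
From mathcomp Require Import all_boot all_order all_algebra.
From mathcomp Require Import reals.
From mathcomp Require Import zify.
From Stdlib Require Import Classical.
Import Order.TTheory GRing.Theory Num.Theory.
Set Implicit Arguments. Unset Strict Implicit.
Local Open Scope ring_scope.

Lemma ex_min_nat (T : Type) (P : T -> Prop) (f : T -> nat) :
  (exists x, P x) -> exists x, P x /\ forall y, P y -> (f x <= f y)%N.
Proof.
move=> [x0 Px0]; apply: NNPP => H.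
suff: forall n x, P x -> f x <> n by move/(_ _ x0 Px0); apply.
elim/ltn_ind => n IH x Px fx; apply: H; exists x; split=> // y Py.
rewrite leqNgt; apply/negP => lt.
by apply: (IH (f y) _ y Py erefl); rewrite -fx.
Qed.

Lemma ex_max_nat (T : Type) (P : T -> Prop) (f : T -> nat) B :
  (exists x, P x) -> (forall x, P x -> (f x <= B)%N) ->
  exists x, P x /\ forall y, P y -> (f y <= f x)%N.
Proof.
move=> ex hB; have [x [Px H]] := @ex_min_nat _ P (fun x => B - f x)%N ex.
exists x; split=> // y Py; have := H y Py; have := hB x Px; have := hB y Py; lia.
Qed.

Definition okb t (p : nat * nat) : bool := ((1 <= p.2 <= p.1) && (p.1 <= t))%N.
Definition ab (p : nat * nat) : nat := (p.2 * (p.1 - p.2))%N.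
Definition phb t (p : nat * nat) : nat := ((t * t).+1 - p.1 * p.1)%N.
Definition cb (F : realType) (R : F) (p : nat * nat) : F := R * p.1%:R + p.2%:R.
Definition Anat (s : seq (nat * nat)) : nat := (\sum_(p <- s) ab p)%N.
Definition Phi t (s : seq (nat * nat)) : nat := (\sum_(p <- s) phb t p)%N.
Definition cost (F : realType) (R : F) (s : seq (nat * nat)) : F := \sum_(p <- s) cb R p.
Definition Good (F : realType) (R : F) C t s := all (okb t) s /\ cost R s <= C%:R.
Definition Opt (F : realType) (R : F) C t s :=
  Good R C t s /\ (forall s2, Good R C t s2 -> (Anat s2 <= Anat s)%N) /\
  (forall s2, Good R C t s2 -> (Anat s <= Anat s2)%N -> (Phi t s <= Phi t s2)%N).

Lemma exch (F : realType) (R : F) C t s x y s' x' y' :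
  Opt R C t s -> perm_eq s (x :: y :: s') -> okb t x' -> okb t y' ->
  (x'.1 + y'.1 = x.1 + y.1)%N -> (x'.2 + y'.2 = x.2 + y.2)%N ->
  (ab x' + ab y' <= ab x + ab y)%N /\
  ((ab x + ab y <= ab x' + ab y')%N -> (phb t x + phb t y <= phb t x' + phb t y')%N).
Proof.
move=> [[cs Cs] [Op Mp]] pe ox oy e1 e2.
have key : forall p q : nat * nat, cb R p + cb R q = R * (p.1 + q.1)%N%:R + (p.2 + q.2)%N%:R.
  by move=> p q; rewrite /cb !natrD mulrDr addrACA.
have G2 : Good R C t (x' :: y' :: s').
  split; first by move: cs; rewrite (perm_all _ pe) /= ox oy => /and3P[_ _ ->].
  have eC : cost R s = cb R x + cb R y + cost R s'.
    by rewrite /cost (perm_big _ pe) !big_cons /= addrA.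
  have eC2 : cost R (x' :: y' :: s') = cb R x' + cb R y' + cost R s'.
    by rewrite /cost !big_cons /= addrA.
  by rewrite eC2 key e1 e2 -key -eC.
have eA : Anat s = (ab x + ab y + Anat s')%N by rewrite /Anat (perm_big _ pe) !big_cons /= addnA.
have eP : Phi t s = (phb t x + phb t y + Phi t s')%N by rewrite /Phi (perm_big _ pe) !big_cons /= addnA.
have eA2 : Anat (x' :: y' :: s') = (ab x' + ab y' + Anat s')%N by rewrite /Anat !big_cons /= addnA.
have eP2 : Phi t (x' :: y' :: s') = (phb t x' + phb t y' + Phi t s')%N by rewrite /Phi !big_cons /= addnA.
split; first by have := Op _ G2; rewrite eA eA2 leq_add2r.
move=> h; have := Mp _ G2; rewrite eA eA2 eP eP2 !leq_add2r; apply; exact: h.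
Qed.

Lemma del (F : realType) (R : F) C t s x s' : (1 <= R) ->
  Opt R C t s -> perm_eq s (x :: s') -> (x.2 < x.1)%N.
Proof.
move=> hR [[cs Cs] [Op Mp]] pe.
have xs : x \in s by rewrite (perm_mem pe) mem_head.
have /andP[/andP[x1 x2] x3] : okb t x by move/allP: cs; apply.
have G2 : Good R C t s'.
  split; first by move: cs; rewrite (perm_all _ pe) /= => /andP[].
  apply: le_trans Cs; rewrite /cost (perm_big _ pe) big_cons /= lerDr.
  by rewrite /cb addr_ge0 // mulr_ge0 // (le_trans _ hR).
rewrite ltnNge; apply/negP => hx.
have a0 : ab x = 0%N.
  rewrite /ab (_ : (x.1 - x.2 = 0)%N) ?muln0 //; lia.

have eA : Anat s = (ab x + Anat s')%N by rewrite /Anat (perm_big _ pe) big_cons.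
have eP : Phi t s = (phb t x + Phi t s')%N by rewrite /Phi (perm_big _ pe) big_cons.
have := Mp _ G2; rewrite eA eP a0 add0n leqnn => /(_ isT).
have : (x.1 * x.1 <= t * t)%N by apply: leq_mul.
rewrite /phb; move: (x.1 * x.1)%N (t * t)%N; lia.
Qed.

Lemma perm_swap2 (T : eqType) (x y : T) s : perm_eq (x :: y :: s) (y :: x :: s).
Proof. by rewrite -/([:: x] ++ [:: y] ++ s) -/([:: y] ++ [:: x] ++ s) perm_catCA. Qed.

Lemma pinfo (F : realType) (R : F) C t s x y s' : (1 <= R) ->
  Opt R C t s -> perm_eq s (x :: y :: s') ->
  [/\ okb t x, okb t y, (x.2 < x.1)%N & (y.2 < y.1)%N].
Proof.
move=> hR O pe; have [[cs _] _] := O.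
have pe2 : perm_eq s (y :: x :: s') by apply: perm_trans pe (perm_swap2 _ _ _).
split.
- by move/allP: cs; apply; rewrite (perm_mem pe) mem_head.
- by move/allP: cs; apply; rewrite (perm_mem pe2) mem_head.
- exact: del hR O pe.
- exact: del hR O pe2.
Qed.

Lemma Pb_half (F : realType) (R : F) C t s x y s' : (1 <= R) ->
  Opt R C t s -> perm_eq s (x :: y :: s') ->
  (x.1 < t)%N -> (y.1 < t)%N -> (y.2 <= x.2)%N -> (y.2 < x.2)%N \/ (y.1 <= x.1)%N -> False.
Proof.
case: x => [l1 n1]; case: y => [l2 n2] hR O pe /= hx hy h2 hor.
have [ox oy dx dy] := pinfo hR O pe; move: dx dy => /= dx dy.
have := exch (x' := (l1.+1, n1)) (y' := (l2.-1, n2)) O pe.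
rewrite /okb /ab /phb /=; move: ox oy; rewrite /okb /=.
move=> /andP[/andP[a1 a2] a3] /andP[/andP[b1 b2] b3].
have -> : ((1 <= n1 <= l1.+1) && (l1.+1 <= t))%N by apply/andP; split; [apply/andP|]; lia.
have -> : ((1 <= n2 <= l2.-1) && (l2.-1 <= t))%N by apply/andP; split; [apply/andP|]; lia.
have e1 : (l1.+1 + l2.-1 = l1 + l2)%N by lia.
move=> /(_ isT isT e1 erefl) [H1 H2].
have E1 : (l1.+1 - n1 = (l1 - n1).+1)%N by lia.
have E2 : (l2 - n2 = (l2.-1 - n2).+1)%N by lia.
move: H1 H2; rewrite E1 E2 !mulnS.
case: (ltnP n2 n1) => hn.
  move=> H1 _; move: H1.
  move: (n1 * (l1 - n1))%N (n2 * (l2.-1 - n2))%N => A B; lia.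
have e : n1 = n2 by lia.
have {}hor : (l2 <= l1)%N by case: hor; lia.
subst n2.
move=> _; move: (n1 * (l1 - n1))%N (n1 * (l2.-1 - n1))%N => A B H2.
have {H2} := H2 ltac:(lia).
have sq : forall a, (a.+1 * a.+1 = a * a + a.*2 + 1)%N.
  by move=> a; rewrite mulSn mulnS -addnn; lia.
have [k ek] : exists k, l2 = k.+1 by exists l2.-1; lia.
subst l2; rewrite /= !sq.
have : (l1.+1 * l1.+1 <= t * t)%N by apply: leq_mul.
have : (k.+1 * k.+1 <= t * t)%N by apply: leq_mul; lia.
rewrite !sq mulSn; move: (l1 * l1)%N (k * k)%N (t * t)%N => a b c; lia.
Qed.

Lemma Pb (F : realType) (R : F) C t s x y s' : (1 <= R) ->
  Opt R C t s -> perm_eq s (x :: y :: s') -> (x.1 < t)%N -> (y.1 < t)%N -> False.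
Proof.
move=> hR O pe hx hy.
have pe2 : perm_eq s (y :: x :: s') by apply: perm_trans pe (perm_swap2 _ _ _).
case: (ltngtP y.2 x.2) => h.
- by apply: (Pb_half hR O pe) => //; [apply: ltnW|left].
- by apply: (Pb_half hR O pe2) => //; [apply: ltnW|left].
- case: (leqP y.1 x.1) => h'.
    by apply: (Pb_half hR O pe) => //; [rewrite h|right].
  by apply: (Pb_half hR O pe2) => //; [rewrite h|right; apply: ltnW].
Qed.

Lemma Pc (F : realType) (R : F) C t s x y s' : (1 <= R) ->
  Opt R C t s -> perm_eq s (x :: y :: s') -> x.1 = t -> (y.1 < t)%N -> (y.2 <= x.2)%N.
Proof.
case: x => [l1 n1]; case: y => [l2 n2] hR O pe /= hx hy.
subst l1.
rewrite leqNgt; apply/negP => h.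
have [ox oy dx dy] := pinfo hR O pe; move: dx dy => /= dx dy.
have := exch (x' := (t, n2)) (y' := (l2, n1)) O pe.
move: ox oy; rewrite /okb /ab /phb /=.
move=> /andP[/andP[a1 a2] a3] /andP[/andP[b1 b2] b3].
have -> : ((1 <= n2 <= t) && (t <= t))%N by apply/andP; split; [apply/andP|]; lia.
have -> : ((1 <= n1 <= l2) && (l2 <= t))%N by apply/andP; split; [apply/andP|]; lia.
rewrite addnC [(n2 + _)%N]addnC.
move=> /(_ isT isT erefl erefl) [H1 _]; move: H1.
have [d ed] : exists d, t = (l2 + d.+1)%N by exists ((t - l2).-1)%N; lia.
have [a ea] : exists a, l2 = (n2 + a)%N by exists ((l2 - n2))%N; lia.
have [g eg] : exists g, n2 = (n1 + g.+1)%N by exists ((n2 - n1).-1)%N; lia.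
subst t l2 n2.
have -> : (n1 + g.+1 + a + d.+1 - (n1 + g.+1) = a + d.+1)%N by lia.
have -> : (n1 + g.+1 + a + d.+1 - n1 = g.+1 + a + d.+1)%N by lia.
have -> : (n1 + g.+1 + a - n1 = g.+1 + a)%N by lia.
have -> : (n1 + g.+1 + a - (n1 + g.+1) = a)%N by lia.
nia.
Qed.

Lemma Pd (F : realType) (R : F) C t s x y s' : (1 <= R) ->
  Opt R C t s -> perm_eq s (x :: y :: s') -> x.1 = t -> y.1 = t -> (x.2 <= y.2.+1)%N.
Proof.
case: x => [l1 n1]; case: y => [l2 n2] hR O pe /= hx hy.
subst l1 l2.
rewrite leqNgt; apply/negP => h.
have [ox oy dx dy] := pinfo hR O pe; move: dx dy => /= dx dy.
have := exch (x' := (t, n1.-1)) (y' := (t, n2.+1)) O pe.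
move: ox oy; rewrite /okb /ab /phb /=.
move=> /andP[/andP[a1 a2] a3] /andP[/andP[b1 b2] b3].
have -> : ((1 <= n1.-1 <= t) && (t <= t))%N by apply/andP; split; [apply/andP|]; lia.
have -> : ((1 <= n2.+1 <= t) && (t <= t))%N by apply/andP; split; [apply/andP|]; lia.
have e2 : (n1.-1 + n2.+1 = n1 + n2)%N by lia.
move=> /(_ isT isT erefl e2) [H1 _]; move: H1.
have [u eu] : exists u, t = (n1 + u)%N by exists ((t - n1))%N; lia.
have [g eg] : exists g, n1 = (n2 + 2 + g)%N by exists ((n1 - n2 - 2))%N; lia.
subst t n1.
have -> : ((n2 + 2 + g).-1 = n2 + 1 + g)%N by lia.
have -> : (n2 + 2 + g + u - (n2 + 1 + g) = u + 1)%N by lia.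
have -> : (n2 + 2 + g + u - n2.+1 = u + 1 + g)%N by lia.
have -> : (n2 + 2 + g + u - (n2 + 2 + g) = u)%N by lia.
have -> : (n2 + 2 + g + u - n2 = u + 2 + g)%N by lia.
nia.
Qed.

Lemma Opt_perm (F : realType) (R : F) C t s1 s2 :
  perm_eq s1 s2 -> Opt R C t s1 -> Opt R C t s2.
Proof.
move=> pe [[cs Cs] [Op Mp]].
have eA : Anat s1 = Anat s2 by rewrite /Anat (perm_big _ pe).
have eP : Phi t s1 = Phi t s2 by rewrite /Phi (perm_big _ pe).
split; first by split; [rewrite -(perm_all _ pe) | rewrite /cost -(perm_big _ pe)].
by split; rewrite -eA //; rewrite -eP.
Qed.

Lemma pos1 (T : eqType) (d : T) (s : seq T) i : (i < size s)%N ->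
  exists s', perm_eq s (nth d s i :: s').
Proof.
move=> hi; exists (rem (nth d s i) s); apply: perm_to_rem; exact: mem_nth.
Qed.

Lemma pos2 (T : eqType) (d : T) (s : seq T) i j : (i < j)%N -> (j < size s)%N ->
  exists s', perm_eq s (nth d s i :: nth d s j :: s').
Proof.
elim: s i j => [|z s IH] i j //= hij hj.
case: i hij => [|i] hij.
  case: j hij hj => [|j] // _ hj /=.
  have [s' pe] := pos1 d hj; exists s'; by rewrite perm_cons.
case: j hij hj => [|j] // hij hj /=.
have [s' pe] := IH i j hij hj; exists (z :: s').
apply: perm_trans (_ : perm_eq _ [:: z, nth d s i, nth d s j & s']) _.
  by rewrite perm_cons.
by rewrite -/([:: z] ++ [:: nth d s i; nth d s j] ++ s')
           -/([:: nth d s i; nth d s j] ++ [:: z] ++ s') perm_catCA.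
Qed.

Definition lep (p q : nat * nat) : bool :=
  ((q.1 < p.1) || ((q.1 == p.1) && (q.2 <= p.2)))%N.

Lemma lep_total : total lep.
Proof. move=> [a b] [c d]; rewrite /lep /=; lia. Qed.
Lemma lep_trans : transitive lep.
Proof. move=> [a b] [c d] [e f]; rewrite /lep /=; lia. Qed.
Lemma lep_refl : reflexive lep.
Proof. move=> [a b]; rewrite /lep /=; lia. Qed.

Lemma Good_nil (F : realType) (R : F) C t : Good R C t [::].
Proof. by split => //; rewrite /cost big_nil ler0n. Qed.

Lemma Good_bound (F : realType) (R : F) C t s : 1 <= R -> Good R C t s -> (Anat s <= t * C)%N.
Proof.
move=> hR [cs Cs].
have h1 : (Anat s <= t * \sum_(p <- s) p.2)%N.
  rewrite /Anat big_distrr /=; rewrite big_seq_cond [X in (_ <= X)%N]big_seq_cond.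
  apply: leq_sum => p /andP[ps _]; have := allP cs p ps; rewrite /okb /ab.
  move=> /andP[/andP[_ _] h]; rewrite mulnC leq_mul2r; apply/orP; right; lia.
apply: (leq_trans h1); rewrite leq_mul2l; apply/orP; right.
rewrite -(ler_nat F); apply: le_trans Cs; rewrite natr_sum /cost.
apply: ler_sum => p _; rewrite /cb lerDr mulr_ge0 //; exact: le_trans hR.
Qed.

Lemma Opt_exists (F : realType) (R : F) C t : 1 <= R -> exists s, Opt R C t s.
Proof.
move=> hR.
have [s0 [G0 M0]] := @ex_max_nat _ (Good R C t) Anat (t * C)%N
   (ex_intro _ _ (Good_nil R C t)) (fun s => Good_bound hR).
have [s1 [[G1 A1] M1]] := @ex_min_nat _ (fun s => Good R C t s /\ (Anat s0 <= Anat s)%N)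
   (Phi t) (ex_intro _ s0 (conj G0 (leqnn _))).
exists s1; split => //; split.
  by move=> s2 G2; apply: leq_trans (M0 _ G2) A1.
move=> s2 G2 h; apply: M1; split => //; exact: leq_trans A1 h.
Qed.

Definition gz (p : nat * nat) : int := p.2%:Z * (p.1%:Z - p.2%:Z).
Definition qc (p : nat * nat) : bool := (1 <= p.2 <= p.1)%N.

Lemma sum_nth_idx (V : nmodType) (f : nat * nat -> V) s :
  \sum_(i < size s) f (nth (0%N, 0%N) s i) = \sum_(p <- s) f p.
Proof. by rewrite (big_nth (0%N, 0%N)) big_mkord. Qed.

Lemma Aval_map s : Aval (map fst s) (map snd s) = \sum_(p <- s) gz p.
Proof.
rewrite /Aval -sum_nth_idx size_map; apply: eq_bigr => i _.
by rewrite !(nth_map (0%N, 0%N)).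
Qed.

Lemma Aval_zip lam nu : size lam = size nu -> Aval lam nu = \sum_(p <- zip lam nu) gz p.
Proof.
move=> e; rewrite /Aval -sum_nth_idx size_zip e minnn; rewrite -e.
by apply: eq_bigr => i _; rewrite nth_zip.
Qed.

Lemma sum_gz_clean s : all qc s -> \sum_(p <- s) gz p = (Anat s)%:Z.
Proof.
elim: s => [|p s IH]; first by rewrite big_nil /Anat big_nil.
rewrite /= => /andP[hp hs]; rewrite big_cons IH // /Anat big_cons PoszD.
congr (_ + _); rewrite /gz /ab PoszM subzn //; by move: hp; rewrite /qc => /andP[].
Qed.

Lemma gz_le0 p : ~~ qc p -> gz p <= 0.
Proof.
rewrite /qc /gz; case: (posnP p.2) => [->|h]; first by rewrite mul0r.
move=> hq; apply: mulr_ge0_le0 => //; rewrite subr_le0 lez_nat; lia.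
Qed.

Lemma opt_bound (F : realType) (R : F) C t s lam' nu' : 1 <= R -> Opt R C t s ->
  admissible R C t lam' nu' -> Aval lam' nu' <= (Anat s)%:Z.
Proof.
move=> hR [_ [Op _]] [e [hl hc]].
set z := zip lam' nu'.
have Gf : Good R C t (filter qc z).
  split.
    have : all (fun p : nat * nat => p.1 <= t)%N z.
      have -> : (fun p : nat * nat => p.1 <= t)%N = preim fst (fun a => a <= t)%N by [].
      rewrite -all_map /z (_ : [seq i.1 | i <- zip lam' nu'] = lam'); last by apply: unzip1_zip; rewrite e.
       apply/(all_nthP 0%N) => i hi; exact: hl.
    rewrite all_filter; apply: sub_all => p /= h; apply/implyP => hq.
    by move: hq; rewrite /qc /okb h => ->.
  apply: le_trans hc.
  have -> : \sum_(i < size lam') (R * (nth 0%N lam' i)%:R + (nth 0%N nu' i)%:R) = cost R z.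
    rewrite /cost -sum_nth_idx /z size_zip e minnn -e; apply: eq_bigr => i _.
    by rewrite nth_zip.
  rewrite /cost big_filter [X in _ <= X](bigID qc) /= lerDl sumr_ge0 // => p _.
  by rewrite /cb addr_ge0 // mulr_ge0 // (le_trans _ hR).
rewrite Aval_zip // -/z (bigID qc) /= -big_filter sum_gz_clean ?filter_all //.
apply: le_trans (_ : (Anat (filter qc z))%:Z + 0 <= _).
  by rewrite lerD2l sumr_le0 // => p; apply: gz_le0.
by rewrite addr0 lez_nat; apply: Op.
Qed.
Unset Implicit Arguments.

Theorem proposition7p1 (F : realType) (R : F) (C t : nat) (hR : 1 <= R) :
  exists (lam nu : seq nat),
    admissible R C t lam nu /\
    (forall lam' nu' : seq nat, admissible R C t lam' nu' -> Aval lam' nu' <= Aval lam nu) /\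
    let r := size lam in
    (* (i) *)
    (forall i, (i.+1 < r)%N ->
       (nth 0%N lam i.+1 <= nth 0%N lam i)%N /\ (nth 0%N nu i.+1 <= nth 0%N nu i)%N) /\
    (forall i, (i < r)%N -> (1 <= nth 0%N nu i)%N /\ (nth 0%N nu i <= nth 0%N lam i)%N) /\
    (* (ii) *)
    (forall i, (i.+1 < r)%N -> nth 0%N lam i = t) /\
    (* (iii) *)
    (exists b m : nat, (b <= r.-1)%N /\
       (forall i, (i < b)%N -> nth 0%N nu i = m) /\
       (forall i, (b <= i)%N -> (i.+1 < r)%N -> (nth 0%N nu i).+1 = m)) /\
    ((0 < r)%N -> nth 0%N lam r.-1 = t ->
       nth 0%N nu r.-1 = nth 0%N nu 0 \/ (nth 0%N nu r.-1).+1 = nth 0%N nu 0).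
Proof.
have [s0 O0] := Opt_exists C t hR.
set s := sort lep s0.
have O : Opt R C t s by apply: Opt_perm O0; rewrite perm_sym perm_sort.
have so : sorted lep s by apply: sort_sorted; exact: lep_total.
have AvalE : Aval (map fst s) (map snd s) = (Anat s)%:Z.
  rewrite Aval_map sum_gz_clean //; have [[cs _] _] := O.
  by apply: sub_all cs => p; rewrite /okb /qc => /andP[].
exists (map fst s), (map snd s).
set d := (0%N, 0%N).
set r := size s.
have nL : forall i, nth 0%N (map fst s) i = (nth d s i).1.
  move=> i; case: (ltnP i r) => hi; first by rewrite (nth_map d).
  by rewrite !nth_default ?size_map.
have nN : forall i, nth 0%N (map snd s) i = (nth d s i).2.
  move=> i; case: (ltnP i r) => hi; first by rewrite (nth_map d).
  by rewrite !nth_default ?size_map.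
have ok : forall i, (i < r)%N -> okb t (nth d s i).
  by move=> i hi; have [[cs _] _] := O; apply: (allP cs); apply: mem_nth.
have le : forall i j, (i <= j)%N -> (j < r)%N -> lep (nth d s i) (nth d s j).
  move=> i j hij hj; apply: (sorted_leq_nth lep_trans lep_refl) => //.
  by rewrite inE; apply: leq_ltn_trans hj.
have PB : forall i j, (i < j)%N -> (j < r)%N -> (nth d s i).1 = t \/ (nth d s j).1 = t.
  move=> i j hij hj; have [s' pe] := pos2 d hij hj.
  have := ok i (ltn_trans hij hj); have := ok j hj; rewrite /okb.
  case: (ltnP (nth d s i).1 t) => h1; last by lia.
  case: (ltnP (nth d s j).1 t) => h2; last by lia.
  by case: (Pb hR O pe h1 h2).
have PC : forall i j, (i != j) -> (i < r)%N -> (j < r)%N -> (nth d s i).1 = t ->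
     ((nth d s j).1 < t)%N -> ((nth d s j).2 <= (nth d s i).2)%N.
  move=> i j nij hi hj h1 h2; case: (ltngtP i j) nij => // hij _.
    by have [s' pe] := pos2 d hij hj; apply: (Pc hR O pe).
  have [s' pe] := pos2 d hij hi.
  by apply: (Pc hR O (perm_trans pe (perm_swap2 _ _ _))).
have PD : forall i j, (i != j) -> (i < r)%N -> (j < r)%N -> (nth d s i).1 = t ->
     (nth d s j).1 = t -> ((nth d s i).2 <= (nth d s j).2.+1)%N.
  move=> i j nij hi hj h1 h2; case: (ltngtP i j) nij => // hij _.
    by have [s' pe] := pos2 d hij hj; apply: (Pd hR O pe).
  have [s' pe] := pos2 d hij hi.
  by apply: (Pd hR O (perm_trans pe (perm_swap2 _ _ _))).
have full : forall i, (i.+1 < r)%N -> (nth d s i).1 = t.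
  move=> i hi; have := ok _ hi; have := ok i (ltnW hi); rewrite /okb.
  have := le i r.-1; have := PB i r.-1; rewrite /lep; lia.
have adjN : forall i, (i.+1 < r)%N -> ((nth d s i.+1).2 <= (nth d s i).2)%N.
  move=> i hi; have := le i i.+1 (leqnSn _) hi; rewrite /lep.
  case: (ltnP (nth d s i.+1).1 (nth d s i).1) => h /=.
    move=> _; apply: (PC i i.+1 _ (ltnW hi) hi (full i hi)).
      by rewrite neq_ltn ltnSn.
    by rewrite -(full i hi).
  by move=> /andP[_ ->].
have monN : forall i k, (i + k < r)%N -> ((nth d s (i + k)).2 <= (nth d s i).2)%N.
  move=> i; elim=> [|k IH] h; first by rewrite addn0.
  rewrite addnS in h *; apply: leq_trans (adjN _ h) (IH (ltnW h)).
have monN' : forall i j, (i <= j)%N -> (j < r)%N -> ((nth d s j).2 <= (nth d s i).2)%N.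
  by move=> i j hij hj; have := monN i (j - i)%N; rewrite subnKC //; apply.
split.
  split; first by rewrite !size_map.
  split; first by move=> i; rewrite size_map nL => hi; have := ok i hi; rewrite /okb => /andP[].
  rewrite size_map; have [[_ Cs] _] := O; apply: le_trans Cs.
  by rewrite /cost -sum_nth_idx le_eqVlt; apply/orP; left; apply/eqP; apply: eq_bigr => i _;
     rewrite nL nN.
split.
  by move=> lam' nu' ad; rewrite AvalE; apply: opt_bound hR O ad.
rewrite /= size_map -/r.
split.
  move=> i hi; rewrite !nL !nN; split; last exact: adjN.
  by have := le i i.+1 (leqnSn _) hi; rewrite /lep; lia.
split.
  by move=> i hi; rewrite !nL !nN; have := ok i hi; rewrite /okb; lia.
split.
  by move=> i hi; rewrite nL; apply: full.
split.
  set m := (nth d s 0).2.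
  set P := fun i => (i == r.-1) || ((nth d s i).2 != m).
  have exP : exists i, P i by exists r.-1; rewrite /P eqxx.
  case: (ex_minnP exP) => b Pb minb.
  exists b, m; split; first by apply: minb; rewrite /P eqxx.
  split.
    move=> i hi; rewrite nN; apply/eqP; apply: negbNE; apply/negP => hn.
    have : (b <= i)%N by apply: minb; rewrite /P hn orbT.
    by rewrite leqNgt hi.
  move=> i hbi hi; rewrite nN.
  have hb : (b < r.-1)%N by lia.
  move: Pb; rewrite /P (_ : (b == r.-1) = false) /=; last by apply/eqP; lia.
  move=> hbm.
  have h1 : ((nth d s b).2 <= m)%N by apply: monN' => //; lia.
  have h2 : ((nth d s i).2 <= (nth d s b).2)%N by apply: monN' => //; lia.
  have i0 : i != 0%N by apply/eqP => i0; subst i; move: hbm; rewrite (_ : b = 0%N) ?eqxx //; lia.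
  have h3 : (m <= (nth d s i).2.+1)%N.
    apply: (PD 0%N i) => //; (try by rewrite eq_sym); (try lia); apply: full; lia.
  lia.
move=> hr hl; rewrite !nN; rewrite nL in hl.
case: (eqVneq r.-1 0%N) => e; first by left; rewrite e.
have h1 := monN' 0%N r.-1 (leq0n _) ltac:(lia).
have h2 : ((nth d s 0).2 <= (nth d s r.-1).2.+1)%N.
  apply: (PD 0%N r.-1) => //; (try by rewrite eq_sym); (try lia); apply: full; lia.
lia.
Qed.
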